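(* Let $\mathsf{X}\in\{\mathsf{F},\mathsf{V}\}$. If $K\subseteq\Sigma^*$ is $\leftarrow$-reducible to $L\subseteq\Gamma^*$ via a Mealy machine with $d$ states, then $X_K(n) \le 2d\cdot X_L(n)$ for all $n$. In particular, for any function $s(n)$ the classes $\mathsf{F}(\mathcal{O}(s))$ and $\mathsf{V}(\mathcal{O}(s))$ are closed under $\leftarrow$-reductions.
   Context: A Mealy machine $(Q,\Sigma,\Gamma,q_0,\delta)$ with finite $Q$ and $\delta\colon Q\times\Sigma\to Q\times\Gamma$ defines $\tau_q$ by $\tau_q(\varepsilon)=\varepsilon$, $\tau_p(bu)=c\,\tau_q(u)$ if $\delta(p,b)=(q,c)$; it computes the $\leftarrow$-transduction $x\mapsto\tau_{q_0}(x^\mathsf{R})^\mathsf{R}$ ($^\mathsf{R}$ = word reversal). This is a $\leftarrow$-reduction from $K$ to $L$ if $x\in K\iff\tau(x)\in L$ for all $x\in\Sigma^*$. A streaming algorithm is a deterministic (possibly infinite-state) automaton with an injective encoding $\mathrm{enc}$ of states into bit strings. Fixed-size: fix a padding symbol in the alphabet; $\mathrm{last}_n(w)$ is the last $n$ symbols of $w$, left-padded with the padding symbol if $|w|<n$; a fixed-size algorithm for $L$ is $(\mathcal{A}_n)$ with $\mathcal{A}_n$ accepting $\{w:\mathrm{last}_n(w)\in L\}$, with space at $n$ the maximal encoding length of a state of $\mathcal{A}_n$; $F_L(n)$ is the minimum over all such algorithms. Variable-size: over alphabet $\cup\{\downarrow\}$, $\mathrm{wnd}(\varepsilon)=\varepsilon$,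 $\mathrm{wnd}(ub)=\mathrm{wnd}(u)b$, $\mathrm{wnd}(u\!\downarrow)=\varepsilon$ if $\mathrm{wnd}(u)=\varepsilon$, $\mathrm{wnd}(u\!\downarrow)=v$ if $\mathrm{wnd}(u)=bv$; an algorithm accepts $\{w:\mathrm{wnd}(w)\in L\}$ with space $v_\mathcal{A}(n)=\max\{|\mathrm{enc}(\mathcal{A}(u'))|:u'\text{ prefix of }u,\ |\mathrm{wnd}(v)|\le n\text{ for all prefixes }v\text{ of }u\}$; $V_L(n)$ is the minimum over all such algorithms. $\mathsf{X}(\mathcal{O}(s))$ is the class of languages with an $\mathsf{X}$-model algorithm of space $\mathcal{O}(s(n))$. *)

(* Defs.v *)
From HB Require Import structures.
From mathcomp Require Import all_boot all_order all_algebra.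
From mathcomp Require Import boolp reals.
Set Implicit Arguments. Unset Strict Implicit. Unset Printing Implicit Defensive.
Import Order.TTheory GRing.Theory Num.Theory.

Section Mealy.
Variables (Sigma Gamma : finType) (Q : finType) (delta : Q -> Sigma -> Q * Gamma).

Fixpoint mtau (p : Q) (u : seq Sigma) : seq Gamma :=
  match u with
  | [::] => [::]
  | b :: u' => (delta p b).2 :: mtau (delta p b).1 u'
  end.

Definition ltransduce (q0 : Q) (x : seq Sigma) : seq Gamma :=
  rev (mtau q0 (rev x)).
End Mealy.

Definition lreduction (Sigma Gamma Q : finType) (q0 : Q)
  (delta : Q -> Sigma -> Q * Gamma) (K : seq Sigma -> Prop) (L : seq Gamma -> Prop) :=
  forall x : seq Sigma, K x <-> L (ltransduce delta q0 x).

Record DA (A : Type) := {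
  st : Type;
  init : st;
  step : st -> A -> st;
  final : st -> Prop;
  enc : st -> seq bool;
  enc_inj : injective enc }.

Definition run (A : Type) (M : DA A) (w : seq A) : st M := foldl (@step A M) (@init A M) w.
Definition accepts (A : Type) (M : DA A) (w : seq A) : Prop := final (run M w).

Definition last_n (A : Type) (pad : A) (n : nat) (w : seq A) : seq A :=
  if size w < n then nseq (n - size w) pad ++ w else drop (size w - n) w.

(* window of a variable-size stream; None plays the role of the symbol ↓ *)
Definition wstep (A : Type) (v : seq A) (a : option A) : seq A :=
  match a with Some b => rcons v b | None => behead v end.
Definition wnd (A : Type) (w : seq (option A)) : seq A := foldl (@wstep A) [::] w.

Lemma ex_asbool (P : nat -> Prop) : (exists k, P k) -> exists k, `[< P k >].
Proof. by case=> k Pk; exists k; apply/asboolP. Qed.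

(* minimum of {k | P k}, or infinity if empty *)
Definition inf_nat (P : nat -> Prop) : option nat :=
  match pselect (exists k, P k) with
  | left h => Some (ex_minn (ex_asbool h))
  | right _ => None
  end.

Definition le_ext (a b : option nat) : Prop :=
  match b, a with
  | None, _ => True
  | Some y, Some x => x <= y
  | Some _, None => False
  end.

Definition mul_ext (c : nat) (a : option nat) : option nat := omap (muln c) a.

Definition fixed_alg (Sigma : finType) (pad : Sigma) (L : seq Sigma -> Prop)
  (n : nat) (M : DA Sigma) : Prop :=
  forall w, accepts M w <-> L (last_n pad n w).

Definition fixed_space_le (Sigma : finType) (M : DA Sigma) (k : nat) : Prop :=
  forall q : st M, size (enc q) <= k.

Definition Fspace (Sigma : finType) (pad : Sigma) (L : seq Sigma -> Prop) (n : nat)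
  : option nat :=
  inf_nat (fun k => exists M, fixed_alg pad L n M /\ fixed_space_le M k).

Definition var_alg (Sigma : finType) (L : seq Sigma -> Prop) (M : DA (option Sigma))
  : Prop := forall w, accepts M w <-> L (wnd w).

Definition var_space_le (Sigma : finType) (M : DA (option Sigma)) (n k : nat) : Prop :=
  forall u u' : seq (option Sigma), prefix u' u ->
    (forall v, prefix v u -> size (wnd v) <= n) ->
    size (enc (run M u')) <= k.

Definition Vspace (Sigma : finType) (L : seq Sigma -> Prop) (n : nat) : option nat :=
  inf_nat (fun k => exists M, var_alg L M /\ var_space_le M n k).

Local Open Scope ring_scope.

Definition inFO (R : realType) (s : nat -> R) (Sigma : finType) (pad : Sigma)
  (L : seq Sigma -> Prop) : Prop :=
  exists Ms : nat -> DA Sigma,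
    (forall n, fixed_alg pad L n (Ms n)) /\
    exists c : R, 0 < c /\ exists n0 : nat, forall n : nat, (n0 <= n)%N ->
      forall q : st (Ms n), (size (enc q))%:R <= c * s n.

Definition inVO (R : realType) (s : nat -> R) (Sigma : finType)
  (L : seq Sigma -> Prop) : Prop :=
  exists M : DA (option Sigma), var_alg L M /\
    exists c : R, 0 < c /\ exists n0 : nat, forall n : nat, (n0 <= n)%N ->
      forall u u' : seq (option Sigma), prefix u' u ->
        (forall v, prefix v u -> (size (wnd v) <= n)%N) ->
        (size (enc (run M u')))%:R <= c * s n.

(* Main.v *)
Require Import Defs.
From HB Require Import structures.
From mathcomp Require Import all_boot all_order all_algebra.
From mathcomp Require Import boolp reals zify.
Set Implicit Arguments. Unset Strict Implicit. Unset Printing Implicit Defensive.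

Lemma catIs_ (T : Type) (s1 s2 s : seq T) : s1 ++ s = s2 ++ s -> s1 = s2.
Proof.
move/(congr1 (@rev T)); rewrite !rev_cat => h.
suff: rev s1 = rev s2 by move/(congr1 (@rev T)); rewrite !revK.
elim: (rev s) h => [|x r IH] /= h; first exact h.
by case: h => /IH.
Qed.

Lemma prefix_rconsE (T : eqType) (v X : seq T) x :
  prefix v (rcons X x) -> v = rcons X x \/ prefix v X.
Proof.
move/prefixP=> [s]; case/lastP: s => [|s' y]; first by rewrite cats0; left.
rewrite -rcons_cat => /rcons_inj [-> _]; right; exact: prefix_prefix.
Qed.

Lemma nseq_true_inj a b (x y : seq bool) :
  nseq a false ++ true :: x = nseq b false ++ true :: y -> x = y.
Proof. by elim: a b => [|a IH] [|b] //= [] // /IH. Qed.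

Definition blk (k : nat) (x : seq bool) : seq bool :=
  if k == 0 then [::] else nseq (k - size x) false ++ true :: x.

Definition sd (x : seq bool) : seq bool := flatten [seq [:: true; b] | b <- x] ++ [:: false].

Lemma size_sd x : size (sd x) = (size x).*2.+1.
Proof. rewrite /sd size_cat addn1; elim: x => //= b x ->; by rewrite doubleS. Qed.

Lemma sd_pf x y s t : sd x ++ s = sd y ++ t -> x = y /\ s = t.
Proof.
rewrite /sd -!catA; elim: x y => [|a x IH] [|b y] //=; first by case.
by case=> -> /IH [-> ->].
Qed.

Lemma size_blk k x : size x <= k -> size (blk k x) = if k == 0 then 0 else k.+1.
Proof. rewrite /blk; case: eqP => // _ h; by rewrite size_cat size_nseq /= addnS subnK. Qed.

Lemma blk_pf k x y s t : size x <= k -> size y <= k -> blk k x ++ s = blk k y ++ t -> x = y /\ s = t.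
Proof.
move=> hx hy h; have e : size (blk k x) = size (blk k y) by rewrite !size_blk.
move/eqP: h; rewrite eqseq_cat // => /andP [/eqP h /eqP ->]; split=> //.
move: h; rewrite /blk; case: eqP => [k0 _|_ /nseq_true_inj //].
by move: hx hy; rewrite k0 !leqn0 !size_eq0 => /eqP -> /eqP ->.
Qed.

Lemma flatten_pf_inj (e : seq bool -> seq bool) (P : pred (seq bool)) :
  (forall x y s t, P x -> P y -> e x ++ s = e y ++ t -> x = y /\ s = t) ->
  forall l1 l2, size l1 = size l2 -> all P l1 -> all P l2 ->
  flatten (map e l1) = flatten (map e l2) -> l1 = l2.
Proof.
move=> pf; elim=> [|x l1 IH] [|y l2] //= [] hs /andP [Px a1] /andP [Py a2].
by case/pf=> // -> /IH ->.
Qed.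

Lemma size_flatten_le (X : eqType) (e : X -> seq bool) m l :
  (forall x, x \in l -> size (e x) <= m) -> size (flatten (map e l)) <= m * size l.
Proof.
elim: l => //= x l IH h; rewrite size_cat mulnS leq_add //.
  by apply: h; rewrite inE eqxx.
by apply: IH => z hz; apply: h; rewrite inE hz orbT.
Qed.

Definition code_l k (l : seq (seq bool)) : seq bool :=
  if all (fun x => size x <= k) l then flatten (map (blk k) l)
  else flatten (map sd l) ++ nseq (size l * k.+1).+1 true.

Lemma size_code_good k l : all (fun x => size x <= k) l ->
  size (flatten (map (blk k) l)) <= (if k == 0 then 0 else k.+1) * size l.
Proof.
move/allP=> h; apply: size_flatten_le => x /h hx; by rewrite size_blk.
Qed.

Lemma code_l_inj k l1 l2 : size l1 = size l2 -> code_l k l1 = code_l k l2 -> l1 = l2.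
Proof.
move=> hs; rewrite /code_l.
have good : forall l, all (fun x => size x <= k) l ->
   size (flatten (map (blk k) l)) < (size l * k.+1).+1.
  move=> l /size_code_good h; rewrite ltnS (leq_trans h) //.
  case: eqP => _; lia.
case: ifP => a1; case: ifP => a2.
- by apply: (@flatten_pf_inj (blk k) (fun x => size x <= k)) => // x y s t; apply: blk_pf.
- move=> h; have := good _ a1; rewrite h size_cat size_nseq -hs.
  by rewrite addnC -ltn_subRL subnn.
- move=> h; have := good _ a2; rewrite -h size_cat size_nseq hs.
  by rewrite addnC -ltn_subRL subnn.
- rewrite hs => /catIs_ h.
  apply: (@flatten_pf_inj sd predT) => //; first by move=> x y s t _ _ /sd_pf.
  by apply/allP. by apply/allP.
Qed.

Lemma code_l_good k l : all (fun x => size x <= k) l -> size (code_l k l) <= 2 * size l * k.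
Proof.
move=> a; rewrite /code_l a; apply: (leq_trans (size_code_good a)).
case: eqP => [->|/eqP]; [lia | nia].
Qed.

Lemma code_l_zero l m : all (fun x => size x <= m) l ->
  size (code_l 0 l) <= (4 * size l + 1) * m.
Proof.
move=> a; rewrite /code_l; case: ifP => a0.
  by rewrite (leq_trans (size_code_good a0)) ?mul0n.
have m1 : 0 < m.
  case/allPn: a0 => x xin; rewrite -ltnNge => hx.
  have := allP a x xin; lia.
rewrite size_cat size_nseq muln1.
have := @size_flatten_le _ sd m.*2.+1 l.
have -> : size (flatten [seq sd i | i <- l]) = size (flatten (map sd l)) by [].
move=> h; have {}h : size (flatten (map sd l)) <= m.*2.+1 * size l.
  by apply: h => x hx; rewrite size_sd; move/allP: a => /(_ x hx); lia.
nia.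
Qed.

Section M.
Variables (Sigma Gamma Q : finType) (delta : Q -> Sigma -> Q * Gamma).

Fixpoint mend (q : Q) (s : seq Sigma) : Q :=
  match s with [::] => q | b :: s' => mend (delta q b).1 s' end.

Lemma mtau_cat q s t : mtau delta q (s ++ t) = mtau delta q s ++ mtau delta (mend q s) t.
Proof. by elim: s q => //= b s IH q; rewrite IH. Qed.

Lemma size_mtau q s : size (mtau delta q s) = size s.
Proof. by elim: s q => //= b s IH q; rewrite IH. Qed.

Definition tr q (w : seq Sigma) := rev (mtau delta q (rev w)).

Lemma size_tr q w : size (tr q w) = size w.
Proof. by rewrite /tr size_rev size_mtau size_rev. Qed.

Lemma tr_rcons q w a : tr q (rcons w a) = rcons (tr (delta q a).1 w) (delta q a).2.
Proof. by rewrite /tr rev_rcons /= rev_cons. Qed.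

Lemma tr_drop q i w : drop i (tr q w) = tr q (drop i w).
Proof.
case: (leqP i (size w)) => hi; last first.
  by rewrite !drop_oversize ?size_tr // ltnW.
rewrite -{1}(cat_take_drop i w) /tr rev_cat mtau_cat rev_cat drop_size_cat //.
by rewrite size_rev size_mtau size_rev size_take; case: ltngtP hi.
Qed.

Lemma tr_behead q w : behead (tr q w) = tr q (behead w).
Proof. by rewrite -!drop1 tr_drop. Qed.

Lemma lastn_pad (pad : Sigma) n w : last_n pad n w = drop (size w) (nseq n pad ++ w).
Proof.
rewrite /last_n drop_cat size_nseq; case: ltnP => h.
  by rewrite drop_nseq.
by [].
Qed.

Lemma enc_fun_inj (A : Type) (M : DA A) k (f g : Q -> st M) :
  code_l k (map (fun q => enc (f q)) (enum Q)) = code_l k (map (fun q => enc (g q)) (enum Q)) ->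
  f = g.
Proof.
move/code_l_inj; rewrite !size_map => /(_ erefl) /eq_in_map h.
apply: funext => q; apply: (@enc_inj _ M); apply: h; by rewrite mem_enum.
Qed.

Definition FA (A : DA Gamma) (k n : nat) (padS : Sigma) (q0 : Q) : DA Sigma :=
  {| st := Q -> st A;
     init := fun q => run A (tr q (nseq n padS));
     step := fun f a q => @step _ A (f (delta q a).1) (delta q a).2;
     final := fun f => @final _ A (f q0);
     enc := fun f => code_l k (map (fun q => @enc _ A (f q)) (enum Q));
     enc_inj := @enc_fun_inj _ A k |}.

Lemma FA_run A k n padS q0 w q :
  run (FA A k n padS q0) w q = run A (tr q (nseq n padS ++ w)).
Proof.
elim/last_ind: w q => [|w a IH] q; first by rewrite cats0.
rewrite /run !foldl_rcons -/(run _ _) -cats1 catA cats1 tr_rcons /run foldl_rcons /=.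
exact: (congr1 (fun s => step s _) (IH _)).
Qed.

Lemma FA_alg (padS : Sigma) (padG : Gamma) q0 K L n A k :
  lreduction q0 delta K L -> fixed_alg padG L n A -> fixed_alg padS K n (FA A k n padS q0).
Proof.
move=> red hA w; rewrite /accepts /= FA_run -/(accepts A _) hA red /ltransduce -/(tr q0 _).
rewrite lastn_pad /last_n size_tr size_cat size_nseq ltnNge leq_addr /=.
by rewrite tr_drop addKn.
Qed.

Lemma FA_space A k n padS q0 :
  fixed_space_le A k -> fixed_space_le (FA A k n padS q0) (2 * #|Q| * k).
Proof.
move=> hA f /=; rewrite cardT -(size_map (fun q => enc (f q))); apply: code_l_good.
by apply/allP => x /mapP [q _ ->].
Qed.

Lemma FA_space0 A n padS q0 (f : st (FA A 0 n padS q0)) m :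
  (forall q, size (enc (f q)) <= m) -> size (enc f) <= (4 * #|Q| + 1) * m.
Proof.
move=> h /=; rewrite cardT -(size_map (fun q => enc (f q))); apply: code_l_zero.
by apply/allP => x /mapP [q _ ->].
Qed.

Definition Vf (g : Q -> seq (option Gamma)) (x : option Sigma) : Q -> seq (option Gamma) :=
  fun q => match x with
           | Some a => rcons (g (delta q a).1) (Some (delta q a).2)
           | None => rcons (g q) None end.
Definition Vs (u : seq (option Sigma)) := foldl Vf (fun _ => [::]) u.

Definition VA (A : DA (option Gamma)) (k : nat) (q0 : Q) : DA (option Sigma) :=
  {| st := Q -> st A;
     init := fun _ => init A;
     step := fun f x q => match x with
             | Some a => @step _ A (f (delta q a).1) (Some (delta q a).2)
             | None => @step _ A (f q) None end;
     final := fun f => @final _ A (f q0);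
     enc := fun f => code_l k (map (fun q => @enc _ A (f q)) (enum Q));
     enc_inj := @enc_fun_inj _ A k |}.

Lemma VA_run A k q0 u q : run (VA A k q0) u q = run A (Vs u q).
Proof.
elim/last_ind: u q => [|u x IH] q //.
rewrite /run /Vs !foldl_rcons /= -/(Vs u) -/(run _ _).
case: x => [a|] /=; rewrite /run foldl_rcons -/(run _ _) -/(run _ _);
  exact: (congr1 (fun s => step s _) (IH _)).
Qed.

Lemma wnd_rcons (A : Type) (u : seq (option A)) x : wnd (rcons u x) = wstep (wnd u) x.
Proof. by rewrite /wnd foldl_rcons. Qed.

Lemma Vs_wnd u q : wnd (Vs u q) = tr q (wnd u).
Proof.
elim/last_ind: u q => [|u x IH] q //.
rewrite /Vs foldl_rcons -/(Vs u) wnd_rcons; case: x => [a|] /=;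
  rewrite wnd_rcons /= IH //.
  by rewrite tr_rcons.
by rewrite tr_behead.
Qed.

Lemma Vs_prefix u q v : prefix v (Vs u q) -> exists u' q', prefix u' u /\ v = Vs u' q'.
Proof.
elim/last_ind: u q v => [|u x IH] q v.
  by case: v => // _; exists [::], q.
rewrite /Vs foldl_rcons -/(Vs u).
have [q' eq] : exists q', Vf (Vs u) x q = rcons (Vs u q') (match x with Some a => Some (delta q a).2 | None => None end).
  by case: x => [a|]; [exists (delta q a).1 | exists q].
rewrite eq; case/prefix_rconsE => [->|/IH [u' [q'' [h ->]]]].
  exists (rcons u x), q; split; first exact: prefix_refl.
  by rewrite foldl_rcons -/(Vs u) eq.
exists u', q''; split => //; apply: prefix_trans h (prefix_rcons _ _).
Qed.

Lemma Vs_prefix_wnd u q v : prefix v (Vs u q) -> exists u', prefix u' u /\ size (wnd v) = size (wnd u').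
Proof.
case/Vs_prefix => u' [q' [h ->]]; exists u'; split => //.
by rewrite Vs_wnd size_tr.
Qed.

Lemma VA_alg q0 K L A k :
  lreduction q0 delta K L -> var_alg L A -> var_alg K (VA A k q0).
Proof.
move=> red hA w; rewrite /accepts /= VA_run -/(accepts A _) hA red Vs_wnd.
by [].
Qed.

Lemma VA_piece n (u u' : seq (option Sigma)) q :
  prefix u' u -> (forall v, prefix v u -> size (wnd v) <= n) ->
  forall v, prefix v (Vs u' q) -> size (wnd v) <= n.
Proof.
move=> hp hw v /Vs_prefix_wnd [u'' [h ->]]; apply: hw; exact: prefix_trans h hp.
Qed.

Lemma VA_space A k q0 n :
  var_space_le A n k -> var_space_le (VA A k q0) n (2 * #|Q| * k).
Proof.
move=> hA u u' hp hw /=; rewrite cardT -(size_map (fun q => enc (run (VA A k q0) u' q))).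
apply: code_l_good; apply/allP => x /mapP [q _ ->].
rewrite VA_run; apply: (hA (Vs u' q)); first exact: prefix_refl.
exact: (VA_piece hp hw).
Qed.

Lemma VA_space0 A q0 (f : st (VA A 0 q0)) m :
  (forall q, size (enc (f q)) <= m) -> size (enc f) <= (4 * #|Q| + 1) * m.
Proof.
move=> h /=; rewrite cardT -(size_map (fun q => enc (f q))); apply: code_l_zero.
by apply/allP => x /mapP [q _ ->].
Qed.
End M.

Lemma inf_nat_Some (P : nat -> Prop) k : inf_nat P = Some k -> P k.
Proof.
rewrite /inf_nat; case: pselect => // h [<-]; case: ex_minnP => m /asboolP //.
Qed.

Lemma inf_nat_min (P : nat -> Prop) j : P j -> exists k, inf_nat P = Some k /\ k <= j.
Proof.
move=> Pj; rewrite /inf_nat; case: pselect => [h|[]]; last by exists j.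
eexists; split; first reflexivity.
case: ex_minnP => m _ hm; apply: hm; exact/asboolP.
Qed.

Lemma le_transfer (P1 P2 : nat -> Prop) c :
  (forall k, P2 k -> P1 (c * k)) -> le_ext (inf_nat P1) (mul_ext c (inf_nat P2)).
Proof.
move=> H; case E: (inf_nat P2) => [k|] //=.
by have [m [-> hm]] := inf_nat_min (H _ (inf_nat_Some E)).
Qed.

Theorem lemma3p3 (Sigma Gamma Q : finType) (q0 : Q) (delta : Q -> Sigma -> Q * Gamma)
  (K : seq Sigma -> Prop) (L : seq Gamma -> Prop) :
  lreduction q0 delta K L ->
  (* X = F *)
  (forall (padS : Sigma) (padG : Gamma) (n : nat),
     le_ext (Fspace padS K n) (mul_ext (2 * #|Q|) (Fspace padG L n))) /\
  (* X = V *)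
  (forall n : nat, le_ext (Vspace K n) (mul_ext (2 * #|Q|) (Vspace L n))) /\
  (* closure of F(O(s)) and V(O(s)) under <- reductions *)
  (forall (R : realType) (s : nat -> R) (padS : Sigma) (padG : Gamma),
     inFO s padG L -> inFO s padS K) /\
  (forall (R : realType) (s : nat -> R), inVO s L -> inVO s K).
Proof.
move=> red.
have Q0 : 0 < #|Q| by apply/card_gt0P; exists q0.
split.
  move=> padS padG n; apply: le_transfer => k [M [hM hs]].
  exists (FA delta M k n padS q0); split; [exact: FA_alg | exact: FA_space].
split.
  move=> n; apply: le_transfer => k [M [hM hs]].
  exists (VA delta M k q0); split; [exact: VA_alg | exact: VA_space].
split.
  move=> R s padS padG [Ms [hMs [c [hc [n0 hb]]]]].
  exists (fun n => FA delta (Ms n) 0 n padS q0); split.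
    by move=> n; apply: FA_alg.
  exists ((4 * #|Q| + 1)%:R * c)%R; split.
    by rewrite Num.Theory.mulr_gt0 // Num.Theory.ltr0n addn1.
  exists n0 => n hn f.
  have [q1 hq1] := eq_bigmax (fun q => size (enc (f q))) Q0.
  have h : size (enc f) <= (4 * #|Q| + 1) * size (enc (f q1)).
    apply: FA_space0 => q; rewrite -hq1; exact: leq_bigmax.
  apply: (Order.POrderTheory.le_trans (y := (((4 * #|Q| + 1) * size (enc (f q1)))%N%:R)%R)).
    by rewrite Num.Theory.ler_nat.
  rewrite GRing.natrM -GRing.mulrA Num.Theory.ler_wpM2l //; exact: hb.
move=> R s [M [hM [c [hc [n0 hb]]]]].
exists (VA delta M 0 q0); split; first exact: VA_alg.
exists ((4 * #|Q| + 1)%:R * c)%R; split.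
  by rewrite Num.Theory.mulr_gt0 // Num.Theory.ltr0n addn1.
exists n0 => n hn u u' hp hw.
set f := run (VA delta M 0 q0) u'.
have [q1 hq1] := eq_bigmax (fun q => size (enc (f q))) Q0.
have h : size (enc f) <= (4 * #|Q| + 1) * size (enc (f q1)).
  apply: VA_space0 => q; rewrite -hq1; exact: leq_bigmax.
apply: (Order.POrderTheory.le_trans (y := (((4 * #|Q| + 1) * size (enc (f q1)))%N%:R)%R)).
  by rewrite Num.Theory.ler_nat.
rewrite GRing.natrM -GRing.mulrA Num.Theory.ler_wpM2l // /f VA_run.
apply: (hb n hn (Vs delta u' q1)); first exact: prefix_refl.
exact: (VA_piece hp hw).
Qed.
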